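(* For every integer $m\ge2$, $P(m+1)<P(m)$, where $$P(m)=\frac{m}{\sqrt\pi}\int_{-\infty}^{\infty}e^{-t^2}\bigl(1-\Phi(t)\bigr)^{m-1}\,dt.$$
   Context: $\Phi$ is the standard normal cumulative distribution function. $P(m)$ is the limit as the number of voters tends to infinity of the probability that a Condorcet winner exists among $m$ candidates under the impartial culture (each voter independently picks one of the $m!$ strict rankings uniformly at random). *)

(* Defs.v *)
From Stdlib Require Import Reals.
From Coquelicot Require Import Coquelicot.
Open Scope R_scope.

Definition Phi (t : R) : R :=
  RInt_gen (fun s => exp (- (s ^ 2) / 2) / sqrt (2 * PI))
           (Rbar_locally m_infty) (at_point t).

Definition P (m : nat) : R :=
  INR m / sqrt PI *
  RInt_gen (fun t => exp (- (t ^ 2)) * (1 - Phi t) ^ (m - 1))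
           (Rbar_locally m_infty) (Rbar_locally p_infty).

(* Main.v *)
Require Import Defs.
From Stdlib Require Import Reals Lra Psatz FunctionalExtensionality.
From Coquelicot Require Import Coquelicot.
Open Scope R_scope.


Section Gen.
Context {T : Type} {F : (T -> Prop) -> Prop} {FF : Filter F}.

Lemma lim_plus (f g : T -> R) a b :
  filterlim f F (locally a) -> filterlim g F (locally b) ->
  filterlim (fun x => f x + g x) F (locally (a + b)).
Proof.
  intros Hf Hg.
  eapply filterlim_comp_2; [exact Hf | exact Hg | exact (filterlim_plus (V:=R_NormedModule) a b)].
Qed.

Lemma lim_opp (f : T -> R) a :
  filterlim f F (locally a) -> filterlim (fun x => - f x) F (locally (- a)).
Proof.
  intros Hf. eapply filterlim_comp; [exact Hf | exact (filterlim_opp (V:=R_NormedModule) a)].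
Qed.

Lemma lim_minus (f g : T -> R) a b :
  filterlim f F (locally a) -> filterlim g F (locally b) ->
  filterlim (fun x => f x - g x) F (locally (a - b)).
Proof.
  intros Hf Hg. apply lim_plus; auto. apply lim_opp; auto.
Qed.

Lemma lim_mult (f g : T -> R) a b :
  filterlim f F (locally a) -> filterlim g F (locally b) ->
  filterlim (fun x => f x * g x) F (locally (a * b)).
Proof.
  intros Hf Hg.
  eapply filterlim_comp_2; [exact Hf | exact Hg | exact (filterlim_mult (K:=R_AbsRing) a b)].
Qed.

Lemma lim_const (c : R) : filterlim (fun _ => c) F (locally c).
Proof. apply filterlim_const. Qed.

End Gen.

Lemma prim_gen (f G : R -> R) (Fa Fb : (R -> Prop) -> Prop) (la lb : R) :
  Filter Fa -> Filter Fb ->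
  (forall a b, is_RInt f a b (G b - G a)) ->
  filterlim G Fa (locally la) -> filterlim G Fb (locally lb) ->
  is_RInt_gen f Fa Fb (lb - la).
Proof.
  intros FFa FFb H Ha Hb.
  unfold is_RInt_gen.
  apply (filterlimi_lim_ext (fun ab => G (snd ab) - G (fst ab))).
  - intros [a b]; apply H.
  - apply (lim_minus (fun ab : R * R => G (snd ab)) (fun ab => G (fst ab))).
    + apply (filterlim_comp _ _ _ snd G _ Fb); [apply filterlim_snd | exact Hb].
    + apply (filterlim_comp _ _ _ fst G _ Fa); [apply filterlim_fst | exact Ha].
Qed.

Lemma prim_RInt (f : R -> R) : (forall x, continuous f x) ->
  forall a b, is_RInt f a b (RInt f 0 b - RInt f 0 a).
Proof.
  intros Hc a b.
  assert (E : forall u v, ex_RInt f u v) by (intros; apply (ex_RInt_continuous (V:=R_CompleteNormedModule)); auto).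
  replace (RInt f 0 b - RInt f 0 a) with (RInt f a b).
  - apply (RInt_correct (V:=R_CompleteNormedModule)); auto.
  - rewrite <- (RInt_Chasles (V:=R_CompleteNormedModule) f a 0 b) by auto.
    rewrite <- (opp_RInt_swap (V:=R_CompleteNormedModule) f 0 a) by auto.
    unfold plus, opp; simpl. ring.
Qed.

Lemma lim_at_point (G : R -> R) t : filterlim G (at_point t) (locally (G t)).
Proof.
  intros P HP. unfold filtermap, at_point. apply locally_singleton; auto.
Qed.

Lemma exRc (f : R -> R) : (forall x, continuous f x) -> forall u v, ex_RInt f u v.
Proof. intros Hc u v; apply (ex_RInt_continuous (V:=R_CompleteNormedModule)); auto. Qed.

Lemma abs_RInt_dom (f g : R -> R) : (forall x, continuous f x) -> (forall x, continuous g x) ->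
  (forall t, Rabs (f t) <= g t) -> forall u v, Rabs (RInt f u v) <= Rabs (RInt g u v).
Proof.
  intros Hf Hg Hd.
  assert (K : forall u v, u <= v -> Rabs (RInt f u v) <= Rabs (RInt g u v)).
  { intros u v Huv.
    eapply Rle_trans. apply abs_RInt_le; auto. apply exRc; auto.
    rewrite (Rabs_right (RInt g u v)).
    - apply RInt_le.
      + exact Huv.
      + apply (ex_RInt_continuous (V:=R_CompleteNormedModule)); intros.
        apply (continuous_comp f Rabs); auto. apply continuous_Rabs.
      + apply exRc; auto.
      + intros; apply Hd.
    - apply Rle_ge, RInt_ge_0; auto. apply exRc; auto.
      intros; eapply Rle_trans; [apply Rabs_pos | apply Hd]. }
  intros u v. destruct (Rle_lt_dec u v) as [H|H]; auto.
  rewrite <- (opp_RInt_swap (V:=R_CompleteNormedModule) f) by (apply exRc; auto).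
  rewrite <- (opp_RInt_swap (V:=R_CompleteNormedModule) g) by (apply exRc; auto).
  unfold opp; simpl. rewrite !Rabs_Ropp. apply K; lra.
Qed.

Lemma ball_R (x e y : R) : ball x e y <-> Rabs (y - x) < e.
Proof. reflexivity. Qed.

Lemma lim_exists_dom (Fx : (R -> Prop) -> Prop) {FF : ProperFilter Fx} (f g : R -> R) L :
  (forall x, continuous f x) -> (forall x, continuous g x) ->
  (forall t, Rabs (f t) <= g t) ->
  filterlim (fun x => RInt g 0 x) Fx (locally L) ->
  exists L', filterlim (fun x => RInt f 0 x) Fx (locally L').
Proof.
  intros Hf Hg Hd HL.
  apply (filterlim_locally_cauchy (U:=R_CompleteSpace) (fun x => RInt f 0 x)).
  intros eps.
  assert (He : 0 < eps / 2) by (destruct eps; simpl; lra).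
  exists (fun x => ball L (mkposreal _ He) (RInt g 0 x)).
  split.
  - apply HL. apply locally_ball.
  - intros u v Hu Hv. rewrite ball_R in *. simpl in *.
    assert (Eq : forall h, (forall x, continuous h x) -> RInt h 0 v - RInt h 0 u = RInt h u v).
    { intros h Hh. rewrite <- (RInt_Chasles (V:=R_CompleteNormedModule) h u 0 v) by (apply exRc; auto).
      rewrite <- (opp_RInt_swap (V:=R_CompleteNormedModule) h 0 u) by (apply exRc; auto).
      unfold plus, opp; simpl; ring. }
    rewrite (Eq f) by auto.
    eapply Rle_lt_trans. apply (abs_RInt_dom f g); auto.
    rewrite <- (Eq g) by auto.
    replace (RInt g 0 v - RInt g 0 u) with ((RInt g 0 v - L) - (RInt g 0 u - L)) by ring.
    eapply Rle_lt_trans. apply Rabs_triang. rewrite Rabs_Ropp. lra.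
Qed.


Lemma cderiv (f : R -> R) x : ex_derive f x -> continuous f x.
Proof. intros H. apply (ex_derive_continuous (K:=R_AbsRing) (V:=R_NormedModule)). exact H. Qed.

Definition E (t : R) := exp (- (t ^ 2)).
Definition G (x : R) := RInt E 0 x.
Definition kk (x t : R) := exp (- (x ^ 2) * (1 + t ^ 2)) / (1 + t ^ 2).
Definition II (x : R) := RInt (fun t => kk x t) 0 1.

Lemma E_cont : forall x, continuous E x.
Proof. intros x. apply cderiv. unfold E. auto_derive. trivial. Qed.

Lemma kk_cont : forall x t, continuous (kk x) t.
Proof. intros x t. apply cderiv. unfold kk. auto_derive.
  apply Rgt_not_eq. nra. Qed.

Lemma kk_der : forall x t : R, is_derive (fun z => kk z t) x (-2 * x * exp (- (x ^ 2) * (1 + t ^ 2))).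
Proof. intros x t. unfold kk. auto_derive. trivial. simpl. replace (x * (x * 1)) with (x ^ 2) by (simpl; ring). replace (t*(t*1)) with (t^2) by ring. assert (0 < 1 + t^2) by nra. field. lra. Qed.

Lemma kk_Derive : forall x t, Derive (fun z => kk z t) x = -2 * x * exp (- (x ^ 2) * (1 + t ^ 2)).
Proof. intros x t. apply is_derive_unique. apply kk_der. Qed.

Lemma kk_d2 : forall x t,
  continuity_2d_pt (fun u v => Derive (fun z => kk z v) u) x t.
Proof.
  intros x t.
  apply (continuity_2d_pt_ext (fun u v => (-2 * u) * exp (- (u * u) * (1 + v * v)))).
  { intros u v. symmetry. apply is_derive_unique. replace (u*u) with (u^2) by ring. replace (v*v) with (v^2) by ring. apply kk_der. }
  apply continuity_2d_pt_mult.
  - apply continuity_2d_pt_mult. apply continuity_2d_pt_const. apply continuity_2d_pt_id1.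
  - apply (continuity_1d_2d_pt_comp exp (fun u v => - (u * u) * (1 + v * v))).
    + apply derivable_continuous_pt, derivable_pt_exp.
    + apply continuity_2d_pt_mult.
      * apply continuity_2d_pt_opp, continuity_2d_pt_mult; apply continuity_2d_pt_id1.
      * apply continuity_2d_pt_plus. apply continuity_2d_pt_const.
        apply continuity_2d_pt_mult; apply continuity_2d_pt_id2.
Qed.

Lemma G_der : forall x : R, is_derive G x (E x).
Proof.
  intros x. apply (is_derive_RInt E G 0 x).
  - apply filter_forall. intros y. apply (RInt_correct (V:=R_CompleteNormedModule)), exRc, E_cont.
  - apply E_cont.
Qed.

Lemma aux_eq (x e a : R) : e <> 0 -> -2*x*a = -2 * /e * (x*(a*e)).
Proof. intros; field; auto. Qed.

Lemma II_der : forall x : R, is_derive II x (-2 * E x * G x).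
Proof.
  intros x. unfold II.
  eapply is_derive_ext; [intros; reflexivity|].
  replace (-2 * E x * G x) with (RInt (fun t => Derive (fun u => kk u t) x) 0 1).
  - apply (is_derive_RInt_param kk 0 1 x).
    + apply filter_forall. intros y t _. eexists. apply kk_der.
    + intros t _. apply kk_d2.
    + apply filter_forall. intros y. apply exRc. apply kk_cont.
  - rewrite (RInt_ext _ (fun t => scal (-2 * E x) (scal x (E (x * t + 0))))).
    2:{ intros t _. rewrite kk_Derive. unfold scal; simpl.
        unfold mult; simpl. unfold E. rewrite Rplus_0_r.
        replace (- (x * t) ^ 2) with (- (x ^ 2) * (1 + t ^ 2) + x ^ 2) by ring.
        rewrite exp_plus. replace (exp (- x ^ 2)) with (/ exp (x ^ 2)).
        2:{ rewrite <- exp_Ropp. reflexivity. }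
        replace (x*(x*1)) with (x^2) by ring. replace (t*(t*1)) with (t^2) by ring.
        apply aux_eq. apply Rgt_not_eq, exp_pos. }
    rewrite (RInt_scal (V:=R_CompleteNormedModule)).
    + assert (HC := RInt_comp_lin (V:=R_CompleteNormedModule) E x 0 0 1 (exRc E E_cont _ _)).
      replace (x * 0 + 0) with 0 in HC by ring. replace (x * 1 + 0) with x in HC by ring.
      unfold G. rewrite <- HC. reflexivity.
    + apply (ex_RInt_continuous (V:=R_CompleteNormedModule)). intros z _.
      unfold scal; simpl; unfold mult; simpl. apply cderiv. unfold E. auto_derive. trivial.
Qed.

Lemma G0 : G 0 = 0.
Proof. unfold G. apply (RInt_point (V:=R_CompleteNormedModule)). Qed.

Lemma II0 : II 0 = PI / 4.
Proof.
  unfold II.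
  rewrite (RInt_ext _ (fun t => / (1 + t ^ 2))).
  2:{ intros t _. unfold kk. replace (- (0 ^ 2) * (1 + t ^ 2)) with 0 by ring.
      rewrite exp_0. unfold Rdiv. apply Rmult_1_l. }
  apply is_RInt_unique.
  rewrite <- atan_1. replace (atan 1) with (atan 1 - atan 0) by (rewrite atan_0; ring).
  apply (is_RInt_derive (V:=R_CompleteNormedModule) atan (fun t => / (1 + t ^ 2))).
  - intros t _. replace (t ^ 2) with (t²) by (unfold Rsqr; ring). apply is_derive_atan.
  - intros t _. apply cderiv. auto_derive. nra.
Qed.

Lemma h_const : forall x : R, G x ^ 2 + II x = PI / 4.
Proof.
  intros x.
  assert (Hd : forall y : R, is_derive (fun y => G y ^ 2 + II y) y 0).
  { intros y.
    replace 0 with (plus (INR 2 * E y * G y ^ Init.Nat.pred 2) (-2 * E y * G y)).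
    - apply (is_derive_plus (V:=R_NormedModule) (fun y => G y ^ 2) II).
      + apply is_derive_pow, G_der.
      + apply II_der.
    - unfold plus; simpl. ring. }
  assert (H1 := is_RInt_derive (V:=R_CompleteNormedModule) (fun y => G y ^ 2 + II y) (fun _ => 0) 0 x
                  (fun y _ => Hd y) (fun y _ => continuous_const 0 y)).
  assert (H2 := is_RInt_const (V:=R_NormedModule) 0 x 0).
  assert (H3 := is_RInt_unique _ _ _ _ H1).
  assert (H4 := is_RInt_unique _ _ _ _ H2).
  rewrite H3 in H4. unfold scal, minus, plus, opp in H4; simpl in H4; unfold mult in H4; simpl in H4.
  rewrite G0, II0 in H4. lra.
Qed.


Lemma decay (f : R -> R) C : (forall t, Rabs (f t) <= C / (1 + t ^ 2)) ->
  filterlim f (Rbar_locally p_infty) (locally 0) /\ filterlim f (Rbar_locally m_infty) (locally 0).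
Proof.
  intros Hf.
  assert (K : forall eps : posreal, forall t, Rabs C / eps + 1 < Rabs t -> Rabs (f t - 0) < eps).
  { intros [e He] t Ht; simpl in *. rewrite Rminus_0_r.
    eapply Rle_lt_trans; [apply Hf|].
    assert (Ht1 : 1 <= Rabs t). { assert (0 <= Rabs C / e) by (apply Rdiv_le_0_compat; [apply Rabs_pos | lra]). lra. }
    assert (Hsq : t ^ 2 = Rabs t * Rabs t). { rewrite <- Rabs_mult. simpl. rewrite Rmult_1_r. rewrite Rabs_right; [ring|]. apply Rle_ge, Rle_0_sqr. }
    assert (HC : Rabs C < e * Rabs t).
    { assert (Rabs C / e < Rabs t) by lra.
      apply (Rmult_lt_compat_l e) in H; [|lra]. unfold Rdiv in H.
      replace (e * (Rabs C * / e)) with (Rabs C) in H by (field; lra). lra. }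
    apply (Rle_lt_trans _ (Rabs C / (1 + t ^ 2))).
    - unfold Rdiv. apply Rmult_le_compat_r. apply Rlt_le, Rinv_0_lt_compat; nra. apply Rle_abs.
    - apply (Rmult_lt_reg_r (1 + t ^ 2)). nra. unfold Rdiv. rewrite Rmult_assoc, Rinv_l by nra.
      rewrite Hsq. assert (e * Rabs t <= e * (Rabs t * Rabs t)) by (apply Rmult_le_compat_l; nra). nra. }
  split; apply filterlim_locally; intros eps;
  (assert (He := cond_pos eps);
   assert (H0 : 0 <= Rabs C / eps) by (unfold Rdiv; apply Rmult_le_pos; [apply Rabs_pos | apply Rlt_le, Rinv_0_lt_compat; lra])).
  - exists (Rabs C / eps + 1). intros x Hx. apply ball_R, K. set (a := Rabs C / eps) in *. rewrite Rabs_right; lra.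
  - exists (- (Rabs C / eps + 1)). intros x Hx. apply ball_R, K. set (a := Rabs C / eps) in *. rewrite Rabs_left; lra.
Qed.

Lemma E_le : forall t, 0 < E t <= 1 / (1 + t ^ 2).
Proof.
  intros t. unfold E. split. apply exp_pos.
  rewrite exp_Ropp. unfold Rdiv. rewrite Rmult_1_l. apply Rinv_le_contravar. nra.
  apply exp_ineq1_le.
Qed.

Lemma II_bounds : forall x, 0 <= II x <= E x.
Proof.
  intros x. unfold II. split.
  - apply RInt_ge_0. lra. apply exRc, kk_cont. intros t _. unfold kk.
    apply Rlt_le, Rdiv_lt_0_compat. apply exp_pos. nra.
  - replace (E x) with (RInt (fun _ => E x) 0 1).
    2:{ rewrite (RInt_const (V:=R_CompleteNormedModule)). unfold scal; simpl; unfold mult; simpl. ring. }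
    apply RInt_le. lra. apply exRc, kk_cont. apply exRc. intros; apply continuous_const.
    intros t _. unfold kk, E.
    apply (Rle_trans _ (exp (- x ^ 2 * (1 + t ^ 2)))).
    + unfold Rdiv. rewrite <- (Rmult_1_r (exp _)) at 2. apply Rmult_le_compat_l. apply Rlt_le, exp_pos.
      rewrite <- Rinv_1. apply Rinv_le_contravar. lra. nra.
    + destruct (Req_dec (- x ^ 2 * (1 + t ^ 2)) (- x ^ 2)) as [Heq|Hne].
      * rewrite Heq. lra.
      * apply Rlt_le, exp_increasing. nra.
Qed.

Lemma G_lim_p : filterlim G (Rbar_locally p_infty) (locally (sqrt PI / 2)).
Proof.
  assert (HI : filterlim II (Rbar_locally p_infty) (locally 0)).
  { apply (decay II 1). intros t. destruct (II_bounds t), (E_le t). rewrite Rabs_right; lra. }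
  apply (filterlim_ext_loc (fun x => sqrt (PI / 4 - II x))).
  { exists 0. intros x Hx. rewrite <- (h_const x).
    replace (G x ^ 2 + II x - II x) with (G x * G x) by ring.
    apply sqrt_square. unfold G. apply RInt_ge_0. lra. apply exRc, E_cont.
    intros; destruct (E_le x0); lra. }
  replace (sqrt PI / 2) with (sqrt (PI / 4 - 0)).
  2:{ rewrite Rminus_0_r, sqrt_div_alt by lra. replace 4 with (2 * 2) by ring.
      rewrite sqrt_square; lra. }
  eapply filterlim_comp.
  - apply lim_minus. apply lim_const. exact HI.
  - apply continuous_sqrt.
Qed.


Lemma RInt_even (f : R -> R) : (forall x, continuous f x) -> (forall t, f (- t) = f t) ->
  forall x, RInt f 0 (- x) = - RInt f 0 x.
Proof.
  intros Hc He x.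
  assert (H1 : is_RInt (fun y => opp (f (- y))) 0 x (RInt f 0 (- x))).
  { apply (is_RInt_comp_opp (V:=R_NormedModule)). rewrite Ropp_0.
    apply (RInt_correct (V:=R_CompleteNormedModule)), exRc; auto. }
  assert (H2 : is_RInt (fun y => opp (f y)) 0 x (opp (RInt f 0 x))).
  { apply (is_RInt_opp (V:=R_NormedModule)). apply (RInt_correct (V:=R_CompleteNormedModule)), exRc; auto. }
  apply (is_RInt_ext _ (fun y => opp (f y))) in H1.
  2:{ intros; rewrite He; reflexivity. }
  assert (A := is_RInt_unique _ _ _ _ H1). assert (B := is_RInt_unique _ _ _ _ H2). unfold opp in *; simpl in *. rewrite <- A. exact B.
Qed.

Lemma lim_scale_p (a : R) : 0 < a -> filterlim (fun x => a * x) (Rbar_locally p_infty) (Rbar_locally p_infty).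
Proof.
  intros Ha P [M HM]. exists (M / a). intros x Hx. apply HM.
  apply (Rmult_lt_compat_l a) in Hx; auto. replace (a * (M / a)) with M in Hx by (field; lra). lra.
Qed.

Lemma lim_opp_m (f : R -> R) l : filterlim f (Rbar_locally p_infty) (locally l) ->
  filterlim (fun x => f (- x)) (Rbar_locally m_infty) (locally l).
Proof.
  intros H. eapply filterlim_comp; [apply (filterlim_Rbar_opp m_infty) | exact H].
Qed.

Lemma G_odd x : G (- x) = - G x.
Proof. apply RInt_even. apply E_cont. intros t; unfold E; f_equal; ring. Qed.

Lemma G_lim_m : filterlim G (Rbar_locally m_infty) (locally (- (sqrt PI / 2))).
Proof.
  apply (filterlim_ext (fun x => - G (- x))).
  { intros x. rewrite G_odd. ring. }
  apply lim_opp. apply (lim_opp_m G). apply G_lim_p.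
Qed.

Definition phi (s : R) := exp (- (s ^ 2) / 2) / sqrt (2 * PI).

Lemma phi_cont : forall x, continuous phi x.
Proof. intros x. apply cderiv. unfold phi. auto_derive. trivial. Qed.

Lemma sqrt2PI : sqrt (2 * PI) = sqrt 2 * sqrt PI.
Proof. apply sqrt_mult; lra || (left; apply PI_RGT_0). Qed.

Lemma sqrt2_pos : 0 < sqrt 2.
Proof. apply sqrt_lt_R0; lra. Qed.

Lemma sqrtPI_pos : 0 < sqrt PI.
Proof. apply sqrt_lt_R0, PI_RGT_0. Qed.

Lemma phiI x : RInt phi 0 x = G (x / sqrt 2) / sqrt PI.
Proof.
  assert (r2 := sqrt2_pos). assert (rp := sqrtPI_pos).
  assert (Hs : sqrt 2 * sqrt 2 = 2) by (apply sqrt_sqrt; lra).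
  assert (HC := RInt_comp_lin (V:=R_CompleteNormedModule) E (/ sqrt 2) 0 0 x (exRc E E_cont _ _)).
  replace (/ sqrt 2 * 0 + 0) with 0 in HC by ring.
  replace (/ sqrt 2 * x + 0) with (x / sqrt 2) in HC by (unfold Rdiv; ring).
  unfold G. rewrite <- HC.
  rewrite (RInt_ext _ (fun y => scal (sqrt 2 / sqrt (2 * PI)) (scal (/ sqrt 2) (E (/ sqrt 2 * y + 0))))).
  2:{ intros y _. unfold scal; simpl; unfold mult; simpl. unfold phi, E.
      replace (- ((/ sqrt 2 * y + 0) ^ 2)) with (- (y ^ 2) / 2).
      - field. rewrite sqrt2PI. split; apply Rgt_not_eq; auto. apply Rmult_lt_0_compat; auto.
      - replace ((/ sqrt 2 * y + 0) ^ 2) with (y ^ 2 / (sqrt 2 * sqrt 2)) by (field; lra).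
        rewrite Hs. field. }
  rewrite (RInt_scal (V:=R_CompleteNormedModule)).
  - unfold scal at 1; simpl; unfold mult; simpl. rewrite sqrt2PI. assert (Hk : forall J : R, sqrt 2 / (sqrt 2 * sqrt PI) * J = J / sqrt PI) by (intros; field; split; apply Rgt_not_eq; auto). apply Hk.
  - apply exRc. intros z. unfold scal; simpl; unfold mult; simpl. apply cderiv. unfold E. auto_derive. trivial.
Qed.

Lemma phiI_lim_p : filterlim (fun x => RInt phi 0 x) (Rbar_locally p_infty) (locally (1 / 2)).
Proof.
  assert (rp := sqrtPI_pos). assert (r2 := sqrt2_pos).
  apply (filterlim_ext (fun x => G (/ sqrt 2 * x) * / sqrt PI)).
  { intros x. rewrite phiI. unfold Rdiv. rewrite (Rmult_comm x). reflexivity. }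
  replace (1 / 2) with ((sqrt PI / 2) * / sqrt PI) by (field; lra).
  apply lim_mult; [| apply lim_const].
  eapply filterlim_comp; [apply lim_scale_p | apply G_lim_p].
  apply Rinv_0_lt_compat; auto.
Qed.

Lemma phi_even t : phi (- t) = phi t.
Proof. unfold phi. f_equal. f_equal. f_equal. ring. Qed.

Lemma phiI_lim_m : filterlim (fun x => RInt phi 0 x) (Rbar_locally m_infty) (locally (- (1 / 2))).
Proof.
  apply (filterlim_ext (fun x => - RInt phi 0 (- x))).
  { intros x. rewrite (RInt_even phi phi_cont phi_even). ring. }
  apply lim_opp. apply (lim_opp_m (fun x => RInt phi 0 x)). apply phiI_lim_p.
Qed.

Definition Phi0 (t : R) := 1 / 2 + RInt phi 0 t.

Lemma Phi_eq : forall t, Phi t = Phi0 t.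
Proof.
  intros t. unfold Phi, Phi0. fold phi.
  apply is_RInt_gen_unique.
  replace (1 / 2 + RInt phi 0 t) with (RInt phi 0 t - - (1 / 2)) by ring.
  apply (prim_gen phi (fun x => RInt phi 0 x)); try typeclasses eauto.
  - apply prim_RInt, phi_cont.
  - apply phiI_lim_m.
  - apply lim_at_point.
Qed.


Lemma phi_pos t : 0 < phi t.
Proof. unfold phi. apply Rdiv_lt_0_compat. apply exp_pos. rewrite sqrt2PI. apply Rmult_lt_0_compat; [apply sqrt2_pos|apply sqrtPI_pos]. Qed.

Lemma Phi0_der : forall t : R, is_derive Phi0 t (phi t).
Proof.
  intros t. unfold Phi0.
  apply (is_derive_ext (fun x => plus (1/2) (RInt phi 0 x))). { intros; reflexivity. }
  replace (phi t) with (plus 0 (phi t)) by (unfold plus; simpl; ring).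
  apply (is_derive_plus (V:=R_NormedModule) (fun _ => 1/2) (fun x => RInt phi 0 x)). apply (is_derive_const (V:=R_NormedModule)).
  apply (is_derive_RInt phi (fun x => RInt phi 0 x) 0 t).
  - apply filter_forall. intros y. apply (RInt_correct (V:=R_CompleteNormedModule)), exRc, phi_cont.
  - apply phi_cont.
Qed.

Lemma phi_der : forall t : R, is_derive phi t (- t * phi t).
Proof. intros t. unfold phi. auto_derive. trivial. replace (- (t * (t * 1)) * / 2) with (- t ^ 2 / 2) by field. field. rewrite sqrt2PI. apply Rgt_not_eq, Rmult_lt_0_compat; [apply sqrt2_pos|apply sqrtPI_pos]. Qed.

Lemma Phi0_Derive t : Derive Phi0 t = phi t.
Proof. apply is_derive_unique, Phi0_der. Qed.
Lemma phi_Derive t : Derive phi t = - t * phi t.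
Proof. apply is_derive_unique, phi_der. Qed.
Lemma Phi0_ex t : ex_derive Phi0 t.
Proof. eexists; apply Phi0_der. Qed.
Lemma phi_ex t : ex_derive phi t.
Proof. eexists; apply phi_der. Qed.

Lemma Phi0_sym t : Phi0 (- t) = 1 - Phi0 t.
Proof. assert (H := RInt_even phi phi_cont phi_even t). unfold Phi0. rewrite H. lra. Qed.

Lemma Phi0_lt a b : a < b -> Phi0 a < Phi0 b.
Proof.
  intros Hab. unfold Phi0.
  rewrite <- (RInt_Chasles (V:=R_CompleteNormedModule) phi 0 a b) by (apply exRc, phi_cont).
  unfold plus; simpl.
  assert (0 < RInt phi a b). { apply RInt_gt_0; auto. intros; apply phi_pos. intros; apply phi_cont. }
  lra.
Qed.

Lemma Phi0_lim_p : filterlim Phi0 (Rbar_locally p_infty) (locally 1).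
Proof.
  replace 1 with (1/2 + 1/2) by field. apply lim_plus. apply lim_const. apply phiI_lim_p.
Qed.

Lemma Phi0_le1 t : Phi0 t <= 1.
Proof.
  assert (H := filterlim_le (F := Rbar_locally p_infty) (fun _ => Phi0 t) Phi0 (Phi0 t) 1).
  simpl in H. apply H.
  - exists t. intros x Hx. apply Rlt_le, Phi0_lt; auto.
  - apply lim_const.
  - apply Phi0_lim_p.
Qed.

Lemma Phi0_bounds t : 0 < Phi0 t < 1.
Proof.
  assert (H1 : Phi0 t < 1). { eapply Rlt_le_trans. apply (Phi0_lt t (t+1)); lra. apply Phi0_le1. }
  split; auto.
  assert (H2 : Phi0 (- t) < 1). { eapply Rlt_le_trans. apply (Phi0_lt (-t) (-t+1)); lra. apply Phi0_le1. }
  rewrite Phi0_sym in H2. lra.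
Qed.

Lemma Phi0_half t : 0 < t -> 1 / 2 < Phi0 t.
Proof.
  intros Ht. replace (1/2) with (Phi0 0). apply Phi0_lt; auto.
  unfold Phi0. rewrite (RInt_point (V:=R_CompleteNormedModule)). unfold zero; simpl. ring.
Qed.

Lemma Phi0_cont t : continuous Phi0 t.
Proof. apply cderiv, Phi0_ex. Qed.


Definition gfun (n : nat) (t : R) := exp (- (t ^ 2)) * (1 - Phi0 t) ^ n.

Lemma gfun_cont n t : continuous (gfun n) t.
Proof. apply cderiv. unfold gfun. auto_derive. apply Phi0_ex. Qed.

Lemma pow01 (x : R) n : 0 <= x <= 1 -> 0 <= x ^ n <= 1.
Proof.
  intros Hx. induction n; simpl. lra.
  destruct IHn. split. apply Rmult_le_pos; lra.
  rewrite <- (Rmult_1_r 1). apply Rmult_le_compat; lra.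
Qed.

Lemma u_bounds t : 0 <= 1 - Phi0 t <= 1.
Proof. destruct (Phi0_bounds t). lra. Qed.

Lemma gfun_dom n t : Rabs (gfun n t) <= E t.
Proof.
  unfold gfun, E. destruct (pow01 _ n (u_bounds t)).
  rewrite Rabs_mult, Rabs_right, Rabs_right. 2,3: apply Rle_ge; try lra. 2: apply Rlt_le, exp_pos.
  rewrite <- (Rmult_1_r (exp _)) at 2. apply Rmult_le_compat_l. apply Rlt_le, exp_pos. lra.
Qed.

Lemma gfun_lims n : exists Lp Lm,
  filterlim (fun x => RInt (gfun n) 0 x) (Rbar_locally p_infty) (locally Lp) /\
  filterlim (fun x => RInt (gfun n) 0 x) (Rbar_locally m_infty) (locally Lm).
Proof.
  destruct (lim_exists_dom (Rbar_locally p_infty) (gfun n) E (sqrt PI / 2) (gfun_cont n) E_cont (gfun_dom n) G_lim_p) as [Lp Hp].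
  destruct (lim_exists_dom (Rbar_locally m_infty) (gfun n) E _ (gfun_cont n) E_cont (gfun_dom n) G_lim_m) as [Lm Hm].
  exists Lp, Lm. auto.
Qed.

Lemma pow_lt_strict (a b : R) n : 0 <= a < b -> (1 <= n)%nat -> a ^ n < b ^ n.
Proof.
  intros Hab Hn. destruct n. lia. simpl.
  assert (a ^ n <= b ^ n) by (apply pow_incr; lra).
  assert (0 < b ^ n) by (apply pow_lt; lra).
  assert (0 <= a ^ n) by (apply pow_le; lra).
  nra.
Qed.

Lemma phi_sq t : 2 * PI * phi t ^ 2 = exp (- (t ^ 2)).
Proof.
  unfold phi. assert (Hs : sqrt (2 * PI) * sqrt (2 * PI) = 2 * PI).
  { apply sqrt_sqrt. assert (H := PI_RGT_0). lra. }
  assert (Hp : 0 < sqrt (2 * PI)) by (rewrite sqrt2PI; apply Rmult_lt_0_compat; [apply sqrt2_pos|apply sqrtPI_pos]).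
  replace (exp (- (t ^ 2))) with (exp (- t ^ 2 / 2) * exp (- t ^ 2 / 2)).
  2:{ rewrite <- exp_plus. f_equal. field. }
  field_simplify. 2: lra. assert (HP := PI_RGT_0). replace (sqrt (2 * PI) ^ 2) with (2 * PI) by (symmetry; apply pow2_sqrt; lra). field. lra.
Qed.

Section Main.
Variable n : nat.
Hypothesis Hn : (1 <= n)%nat.

Definition w t := (1 - Phi0 t) ^ (S n) * Phi0 t.
Definition Q t := - (2 * PI) * phi t * w t.
Definition k t := - t * phi t * w t.
Definition hfun t := INR (S n) * gfun n t - INR (S (S n)) * gfun (S n) t.
Definition Hh x := INR (S n) * RInt (gfun n) 0 x - INR (S (S n)) * RInt (gfun (S n)) 0 x.

Lemma Q_der : forall t : R, is_derive Q t (hfun t - 2 * PI * k t).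
Proof.
  intros t. unfold Q, hfun, k, w, gfun.
  auto_derive.
  - repeat split; auto using phi_ex, Phi0_ex.
  - rewrite phi_Derive, Phi0_Derive. rewrite <- phi_sq.
    change (Init.Nat.pred (S n)) with n.
    rewrite <- !tech_pow_Rmult.
    rewrite !S_INR. replace (1 + - Phi0 t) with (1 - Phi0 t) by ring. replace (match n with 0%nat => 1 | S _ => INR n + 1 end) with (INR n + 1) by (destruct n; simpl; ring). ring.
Qed.

Lemma k_cont t : continuous k t.
Proof. apply cderiv. unfold k, w. auto_derive. repeat split; auto using phi_ex, Phi0_ex. Qed.

Lemma hfun_cont t : continuous hfun t.
Proof. apply cderiv. unfold hfun, gfun. auto_derive. repeat split; auto using Phi0_ex. Qed.

Lemma Hh_prim : forall a b, is_RInt hfun a b (Hh b - Hh a).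
Proof.
  intros a b.
  assert (H1 := prim_RInt (gfun n) (gfun_cont n) a b).
  assert (H2 := prim_RInt (gfun (S n)) (gfun_cont (S n)) a b).
  apply (is_RInt_scal (V:=R_NormedModule) _ _ _ (INR (S n))) in H1.
  apply (is_RInt_scal (V:=R_NormedModule) _ _ _ (INR (S (S n)))) in H2.
  assert (H3 := is_RInt_minus (V:=R_NormedModule) _ _ _ _ _ _ H1 H2).
  eapply is_RInt_ext in H3.
  2:{ intros x _. unfold minus, plus, opp, scal; simpl; unfold mult; simpl. reflexivity. }
  unfold minus, plus, opp, scal in H3; simpl in H3; unfold mult in H3; simpl in H3.
  unfold Hh. replace (INR (S n) * RInt (gfun n) 0 b - INR (S (S n)) * RInt (gfun (S n)) 0 b -
    (INR (S n) * RInt (gfun n) 0 a - INR (S (S n)) * RInt (gfun (S n)) 0 a))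
   with (INR (S n) * (RInt (gfun n) 0 b - RInt (gfun n) 0 a) + - (INR (S (S n)) * (RInt (gfun (S n)) 0 b - RInt (gfun (S n)) 0 a))) by ring.
  exact H3.
Qed.

Definition Kp x := (Hh x - Q x) / (2 * PI).

Lemma k_prim : forall a b, is_RInt k a b (Kp b - Kp a).
Proof.
  intros a b.
  assert (HP := PI_RGT_0).
  assert (H1 := Hh_prim a b).
  assert (H2 : is_RInt (fun t => hfun t - 2 * PI * k t) a b (Q b - Q a)).
  { apply (is_RInt_derive (V:=R_CompleteNormedModule) Q).
    - intros x _. apply Q_der.
    - intros x _. apply cderiv. unfold hfun, k, w, gfun. auto_derive. repeat split; auto using phi_ex, Phi0_ex. }
  assert (H3 := is_RInt_minus (V:=R_NormedModule) _ _ _ _ _ _ H1 H2).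
  apply (is_RInt_scal (V:=R_NormedModule) _ _ _ (/ (2 * PI))) in H3.
  eapply is_RInt_ext in H3.
  2:{ intros x _. unfold minus, plus, opp, scal; simpl; unfold mult; simpl.
      instantiate (1 := k). field. lra. }
  unfold minus, plus, opp, scal in H3; simpl in H3; unfold mult in H3; simpl in H3.
  unfold Kp. replace ((Hh b - Q b) / (2 * PI) - (Hh a - Q a) / (2 * PI))
    with (/ (2 * PI) * (Hh b - Hh a + - (Q b - Q a))) by (field; lra).
  exact H3.
Qed.


Lemma phi_bound t : 0 < phi t <= (2 / sqrt (2 * PI)) / (1 + t ^ 2).
Proof.
  split. apply phi_pos.
  assert (Hp : 0 < sqrt (2 * PI)) by (rewrite sqrt2PI; apply Rmult_lt_0_compat; [apply sqrt2_pos|apply sqrtPI_pos]).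
  unfold phi. unfold Rdiv.
  replace (2 * / sqrt (2 * PI) * / (1 + t ^ 2)) with (2 * / (1 + t ^ 2) * / sqrt (2 * PI)) by ring.
  apply Rmult_le_compat_r. apply Rlt_le, Rinv_0_lt_compat; auto.
  replace (- t ^ 2 * / 2) with (- (t ^ 2 / 2)) by (unfold Rdiv; ring). rewrite exp_Ropp.
  assert (H1 := exp_ineq1_le (t ^ 2 / 2)).
  assert (0 < 1 + t ^ 2) by nra.
  replace (2 * / (1 + t ^ 2)) with (/ ((1 + t ^ 2) / 2)) by (field; lra).
  apply Rinv_le_contravar. nra. lra.
Qed.

Lemma w_bounds t : 0 <= w t <= 1.
Proof.
  unfold w. destruct (pow01 _ (S n) (u_bounds t)). destruct (Phi0_bounds t).
  split. apply Rmult_le_pos; lra. apply (Rle_trans _ (1 * 1)); [apply Rmult_le_compat; lra | lra].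
Qed.

Lemma Q_lims : filterlim Q (Rbar_locally p_infty) (locally 0) /\ filterlim Q (Rbar_locally m_infty) (locally 0).
Proof.
  apply (decay Q (2 * PI * (2 / sqrt (2 * PI)))).
  intros t. destruct (phi_bound t), (w_bounds t). assert (HP := PI_RGT_0).
  assert (Habs : Rabs (Q t) = 2 * PI * (phi t * w t)).
  { unfold Q. rewrite Rabs_left1. ring. assert (0 <= phi t * w t) by nra. nra. }
  rewrite Habs. replace (2 * PI * (2 / sqrt (2 * PI)) / (1 + t ^ 2)) with (2 * PI * (2 / sqrt (2 * PI) / (1 + t ^ 2))) by (unfold Rdiv; ring).
  apply Rmult_le_compat_l. lra. nra.
Qed.

Definition s t := k t + k (- t).

Lemma s_eq t : s t = t * phi t * (Phi0 t * (1 - Phi0 t)) * (Phi0 t ^ n - (1 - Phi0 t) ^ n).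
Proof.
  unfold s, k, w. rewrite phi_even, Phi0_sym. replace (1 - (1 - Phi0 t)) with (Phi0 t) by ring.
  rewrite <- !tech_pow_Rmult. ring.
Qed.

Lemma s_pos t : 0 < t -> 0 < s t.
Proof.
  intros Ht. rewrite s_eq. assert (H1 := Phi0_half t Ht). destruct (Phi0_bounds t).
  assert (H2 := phi_pos t).
  assert ((1 - Phi0 t) ^ n < Phi0 t ^ n) by (apply pow_lt_strict; auto; lra).
  apply Rmult_lt_0_compat. apply Rmult_lt_0_compat. apply Rmult_lt_0_compat; auto.
  apply Rmult_lt_0_compat; lra. lra.
Qed.

Lemma s_cont t : continuous s t.
Proof. apply cderiv. unfold s, k, w. auto_derive. repeat split; auto using phi_ex, Phi0_ex. Qed.

Lemma s_prim b : is_RInt s 0 b (Kp b - Kp (- b)).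
Proof.
  assert (H1 := k_prim 0 b).
  assert (H2 : is_RInt (fun y => opp (k (- y))) 0 b (Kp (- b) - Kp 0)).
  { apply (is_RInt_comp_opp (V:=R_NormedModule)). rewrite Ropp_0. apply k_prim. }
  assert (H3 := is_RInt_minus (V:=R_NormedModule) _ _ _ _ _ _ H1 H2).
  eapply is_RInt_ext in H3.
  2:{ intros x _. unfold minus, plus, opp; simpl. instantiate (1 := s). unfold s. ring. }
  unfold minus, plus, opp in H3; simpl in H3.
  replace (Kp b - Kp (- b)) with (Kp b - Kp 0 + - (Kp (- b) - Kp 0)) by ring. exact H3.
Qed.

Lemma S1_pos : 0 < RInt s 0 1.
Proof. apply RInt_gt_0. lra. intros x Hx; apply s_pos; lra. intros; apply s_cont. Qed.

Lemma Sb b : 1 <= b -> RInt s 0 1 <= Kp b - Kp (- b).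
Proof.
  intros Hb. rewrite <- (is_RInt_unique _ _ _ _ (s_prim b)).
  rewrite <- (RInt_Chasles (V:=R_CompleteNormedModule) s 0 1 b) by (apply exRc, s_cont).
  unfold plus; simpl.
  assert (0 <= RInt s 1 b). { apply RInt_ge_0; auto. apply exRc, s_cont. intros x Hx; apply Rlt_le, s_pos; lra. }
  lra.
Qed.

Lemma main_pos (Lp Lm : R) : filterlim Kp (Rbar_locally p_infty) (locally Lp) ->
  filterlim Kp (Rbar_locally m_infty) (locally Lm) -> 0 < Lp - Lm.
Proof.
  intros Hp Hm.
  assert (H := filterlim_le (F := Rbar_locally p_infty) (fun _ => RInt s 0 1) (fun b => Kp b - Kp (- b)) (RInt s 0 1) (Lp - Lm)).
  simpl in H.
  assert (RInt s 0 1 <= Lp - Lm).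
  { apply H.
    - exists 1. intros x Hx. apply Sb. lra.
    - apply lim_const.
    - apply lim_minus. exact Hp.
      eapply filterlim_comp; [apply (filterlim_Rbar_opp p_infty) | exact Hm]. }
  assert (HS1 := S1_pos). lra.
Qed.

End Main.


Lemma gfun_gen n Lp Lm :
  filterlim (fun x => RInt (gfun n) 0 x) (Rbar_locally p_infty) (locally Lp) ->
  filterlim (fun x => RInt (gfun n) 0 x) (Rbar_locally m_infty) (locally Lm) ->
  is_RInt_gen (gfun n) (Rbar_locally m_infty) (Rbar_locally p_infty) (Lp - Lm).
Proof.
  intros Hp Hm. apply (prim_gen (gfun n) (fun x => RInt (gfun n) 0 x)); try typeclasses eauto; auto.
  apply prim_RInt, gfun_cont.
Qed.

Lemma Kp_lim n (F : (R -> Prop) -> Prop) {FF : Filter F} L0 L1 :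
  filterlim (fun x => RInt (gfun n) 0 x) F (locally L0) ->
  filterlim (fun x => RInt (gfun (S n)) 0 x) F (locally L1) ->
  filterlim (Q n) F (locally 0) ->
  filterlim (Kp n) F (locally ((INR (S n) * L0 - INR (S (S n)) * L1 - 0) * / (2 * PI))).
Proof.
  intros H0 H1 HQ. unfold Kp, Hh. unfold Rdiv.
  apply lim_mult; [| apply lim_const].
  apply lim_minus; auto.
  apply lim_minus; apply lim_mult; auto; apply lim_const.
Qed.

Theorem mainTheorem6 : forall m : nat, (2 <= m)%nat -> P (S m) < P m.
Proof.
  intros m Hm. destruct m as [|n]; [lia|]. assert (Hn : (1 <= n)%nat) by lia.
  destruct (gfun_lims n) as [Lp0 [Lm0 [Hp0 Hm0]]].
  destruct (gfun_lims (S n)) as [Lp1 [Lm1 [Hp1 Hm1]]].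
  assert (A0 := gfun_gen n _ _ Hp0 Hm0).
  assert (A1 := gfun_gen (S n) _ _ Hp1 Hm1).
  unfold P.
  replace ((S (S n) - 1)%nat) with (S n) by lia.
  replace ((S n - 1)%nat) with n by lia.
  replace (fun t => exp (- (t ^ 2)) * (1 - Phi t) ^ S n) with (gfun (S n)).
  2:{ apply functional_extensionality. intros t. unfold gfun. rewrite Phi_eq. reflexivity. }
  replace (fun t => exp (- (t ^ 2)) * (1 - Phi t) ^ n) with (gfun n).
  2:{ apply functional_extensionality. intros t. unfold gfun. rewrite Phi_eq. reflexivity. }
  rewrite (is_RInt_gen_unique _ _ A0), (is_RInt_gen_unique _ _ A1).
  destruct (Q_lims n) as [HQp HQm].
  assert (Hpos := main_pos n Hn _ _ (Kp_lim n _ _ _ Hp0 Hp1 HQp) (Kp_lim n _ _ _ Hm0 Hm1 HQm)).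
  assert (HP := PI_RGT_0). assert (Hs := sqrtPI_pos).
  assert (D : 0 < INR (S n) * (Lp0 - Lm0) - INR (S (S n)) * (Lp1 - Lm1)).
  { replace (INR (S n) * (Lp0 - Lm0) - INR (S (S n)) * (Lp1 - Lm1)) with
      ((2 * PI) * ((INR (S n) * Lp0 - INR (S (S n)) * Lp1 - 0) * / (2 * PI) -
                   (INR (S n) * Lm0 - INR (S (S n)) * Lm1 - 0) * / (2 * PI))) by (field; lra).
    apply Rmult_lt_0_compat; lra. }
  unfold Rdiv. apply (Rmult_lt_reg_l (sqrt PI)); auto.
  replace (sqrt PI * (INR (S (S n)) * / sqrt PI * (Lp1 - Lm1))) with (INR (S (S n)) * (Lp1 - Lm1)) by (field; lra).
  replace (sqrt PI * (INR (S n) * / sqrt PI * (Lp0 - Lm0))) with (INR (S n) * (Lp0 - Lm0)) by (field; lra).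
  lra.
Qed.
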